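(* Fix $\varepsilon\ge0$. If $(\pi_1,\dots,\pi_N,\pi_c)\in\Pi^{N+1}$ satisfies $\max_{(s,a)}|\pi_i(s,a)-\pi_c(s,a)|\le\varepsilon$ for all $i$ (i.e. is feasible for the CAL problem), then there exist $\nu_i\in\mathbb{R}^{|\mathcal{S}|}$ and $\lambda_i\in\mathbb{R}^{|\mathcal{S}||\mathcal{A}|}$, $i=1,\dots,N$, such that $(\{\mu^{\pi_i}_i\}_{i=1}^N,\pi_c,\{\lambda_i\}_{i=1}^N,\{\nu_i\}_{i=1}^N)$ is feasible for the relaxed problem (R). Consequently, the optimal value of (R) is at most the optimal value of the CAL problem, where (R) is: minimize $\sum_{i=1}^N\|\Phi^\top\mu_i-\Phi^\top\mu^{\pi^{E_i}}_i\|_1$ over $\mu_i\in\mathbb{R}^{|\mathcal{S}||\mathcal{A}|}$, $\pi_c$, $\lambda_i\in\mathbb{R}^{|\mathcal{S}||\mathcal{A}|}$, $\nu_i\in\mathbb{R}^{|\mathcal{S}|}$ subject to: $\mu_i\in\mathcal{F}_i$ for all $i$; $\pi_c\in\Pi$; $\lambda_i\ge0$ for all $i$; $\nu_i(s)=\sum_{a\in\mathcal{A}}\mu_i(s,a)$ for all $i,s$; and for all $i$, $s\in\mathcal{S}$, $a\in\mathcal{A}$: $|\mu_i(s,a)-\lambda_i(s,a)|\le\varepsilon\,\nu_i(s)$, $\lambda_i(s,a)\ge\rho(s)\pi_c(s,a)$, $\lambda_i(s,a)\ge\nu_i(s)+\frac{|\mathcal{A}|}{1-\gamma}(\pi_c(s,a)-1)$,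 $\lambda_i(s,a)\le\nu_i(s)+\rho(s)(\pi_c(s,a)-1)$, $\lambda_i(s,a)\le\frac{|\mathcal{A}|}{1-\gamma}\pi_c(s,a)$.
   Context: Let $\mathcal{S},\mathcal{A}$ be finite sets, $\gamma\in(0,1)$, $\rho$ a probability distribution on $\mathcal{S}$, and for $i=1,\dots,N$ environment $i$ is the Markov decision process $(\mathcal{S},\mathcal{A},P^i,\gamma,\rho)$. $\Pi$ is the set of stationary policies $\pi:\mathcal{S}\to\Delta(\mathcal{A})$, $\pi(s,a)$ = probability of action $a$ at state $s$. $\mu^\pi_i(s,a)=\sum_{t\ge0}\gamma^t\mathbb{P}^{\pi,i}_\rho[s_t=s,a_t=a]$ is the discounted occupation measure (trajectory law: $s_0\sim\rho$, $a_t\sim\pi(s_t,\cdot)$, $s_{t+1}\sim P^i(\cdot\mid s_t,a_t)$). Let $P^i$ also denote the $|\mathcal{S}||\mathcal{A}|\times|\mathcal{S}|$ matrix with row $(s,a)$ equal to $P^i(\cdot\mid s,a)$, and $B\in\{0,1\}^{|\mathcal{S}||\mathcal{A}|\times|\mathcal{S}|}$ with $B_{(s_j,a_k),s_l}=1$ iff $j=l$; $\mathcal{F}_i=\{\mu\in\mathbb{R}^{|\mathcal{S}||\mathcal{A}|}_{\ge0}:(B-\gamma P^i)^\top\mu=\rho\}$. Expert policies $\pi^{E_i}\in\Pi$ and a cost basis matrix $\Phi\in\mathbb{R}^{|\mathcal{S}||\mathcal{A}|\times n_c}$ with columns of sup-norm at most $1$ are given. The CAL problem with parameter $\varepsilon\ge0$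 is: minimize $\sum_{i=1}^N\|\Phi^\top\mu^{\pi_i}_i-\Phi^\top\mu^{\pi^{E_i}}_i\|_1$ over $(\pi_1,\dots,\pi_N,\pi_c)\in\Pi^{N+1}$ subject to $\max_{(s,a)}|\pi_i(s,a)-\pi_c(s,a)|\le\varepsilon$ for all $i$. *)

(* Defs.v *)
From HB Require Import structures.
From mathcomp Require Import all_boot all_order all_algebra.
From mathcomp Require Import all_classical all_reals all_analysis.
Set Implicit Arguments. Unset Strict Implicit. Unset Printing Implicit Defensive.
Import Order.TTheory GRing.Theory Num.Theory.
Local Open Scope ring_scope.

Section CAL.
Variables (R : realType) (S A : finType).

Definition is_distr (T : finType) (p : T -> R) :=
  (forall x, 0 <= p x) /\ \sum_(x : T) p x = 1.

Definition is_policy (pi : S -> A -> R) := forall s, is_distr (pi s).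

(* transition kernel P(s' | s, a) = P s a s' *)
Definition is_kernel (P : S -> A -> S -> R) := forall s a, is_distr (P s a).

(* law of s_t under the trajectory s_0 ~ rho, a_t ~ pi(s_t,.),
   s_{t+1} ~ P(.|s_t,a_t) *)
Fixpoint state_law (P : S -> A -> S -> R) (pi : S -> A -> R) (rho : S -> R)
    (t : nat) : S -> R :=
  match t with
  | 0 => rho
  | t'.+1 => fun s' =>
      \sum_(s : S) \sum_(a : A) state_law P pi rho t' s * pi s a * P s a s'
  end.

Definition sa_law P pi rho t (s : S) (a : A) :=
  state_law P pi rho t s * pi s a.

Definition occ (gamma : R) P pi rho (s : S) (a : A) : R :=
  limn (fun n => \sum_(0 <= t < n) gamma ^+ t * sa_law P pi rho t s a).

Definition Bmat (s : S) (a : A) (s' : S) : R := (s == s')%:R.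

Definition in_F (gamma : R) (P : S -> A -> S -> R) (rho : S -> R)
    (mu : S -> A -> R) :=
  (forall s a, 0 <= mu s a) /\
  forall s', \sum_(s : S) \sum_(a : A) (Bmat s a s' - gamma * P s a s') * mu s a
             = rho s'.

Definition featmap (nc : nat) (Phi : S -> A -> 'I_nc -> R) (mu : S -> A -> R)
    (k : 'I_nc) : R :=
  \sum_(s : S) \sum_(a : A) Phi s a k * mu s a.

Definition feat_dist nc (Phi : S -> A -> 'I_nc -> R) (mu mu' : S -> A -> R) : R :=
  \sum_(k < nc) `|featmap Phi mu k - featmap Phi mu' k|.

Definition CAL_feasible (N : nat) (eps : R)
    (pis : 'I_N -> S -> A -> R) (pic : S -> A -> R) :=
  (forall i, is_policy (pis i)) /\ is_policy pic /\
  forall i s a, `|pis i s a - pic s a| <= eps.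

Definition CAL_obj (N nc : nat) (gamma : R) (P : 'I_N -> S -> A -> S -> R)
    (rho : S -> R) (Phi : S -> A -> 'I_nc -> R) (piE : 'I_N -> S -> A -> R)
    (pis : 'I_N -> S -> A -> R) : R :=
  \sum_(i < N) feat_dist Phi (occ gamma (P i) (pis i) rho)
                             (occ gamma (P i) (piE i) rho).

Definition R_feasible (N : nat) (eps gamma : R) (P : 'I_N -> S -> A -> S -> R)
    (rho : S -> R) (mus : 'I_N -> S -> A -> R) (pic : S -> A -> R)
    (lams : 'I_N -> S -> A -> R) (nus : 'I_N -> S -> R) :=
  (forall i, in_F gamma (P i) rho (mus i)) /\
  is_policy pic /\
  (forall i s a, 0 <= lams i s a) /\
  (forall i s, nus i s = \sum_(a : A) mus i s a) /\
  (forall i s a,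
     [/\ `|mus i s a - lams i s a| <= eps * nus i s,
         lams i s a >= rho s * pic s a,
         lams i s a >= nus i s + (#|A|%:R / (1 - gamma)) * (pic s a - 1),
         lams i s a <= nus i s + rho s * (pic s a - 1) &
         lams i s a <= (#|A|%:R / (1 - gamma)) * pic s a]).

Definition R_obj (N nc : nat) (gamma : R) (P : 'I_N -> S -> A -> S -> R)
    (rho : S -> R) (Phi : S -> A -> 'I_nc -> R) (piE : 'I_N -> S -> A -> R)
    (mus : 'I_N -> S -> A -> R) : R :=
  \sum_(i < N) feat_dist Phi (mus i) (occ gamma (P i) (piE i) rho).

Definition CAL_value N nc (eps gamma : R) P rho Phi piE : \bar R :=
  ereal_inf [set (@CAL_obj N nc gamma P rho Phi piE x.1)%:E
            | x in [set x | CAL_feasible eps x.1 x.2]].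

Definition R_value N nc (eps gamma : R) P rho Phi piE : \bar R :=
  ereal_inf [set (@R_obj N nc gamma P rho Phi piE x.1.1.1)%:E
            | x in [set x | R_feasible eps gamma P rho x.1.1.1 x.1.1.2 x.1.2 x.2]].

End CAL.

(* Main.v *)
Require Import Defs.
From HB Require Import structures.
From mathcomp Require Import all_boot all_order all_algebra.
From mathcomp Require Import all_classical all_reals all_analysis.
From mathcomp Require Import ring lra.
Import Order.TTheory GRing.Theory Num.Theory.
Import numFieldNormedType.Exports.
Local Open Scope ring_scope.
Local Open Scope classical_set_scope.

Lemma state_law_distr (R : realType) (S A : finType) (P : S -> A -> S -> R)
  (pi : S -> A -> R) (rho : S -> R) t :
  is_kernel P -> is_policy pi -> is_distr rho -> is_distr (state_law P pi rho t).
Proof.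
move=> HP Hpi Hrho; elim: t => [|t [IH0 IH1]] //=; split.
  move=> s'; apply: sumr_ge0 => s _; apply: sumr_ge0 => a _.
  by apply: mulr_ge0; [apply: mulr_ge0; [apply: IH0|apply: (Hpi s).1]|apply: (HP s a).1].
rewrite exchange_big /= -IH1; apply: eq_bigr => s _.
rewrite exchange_big /=.
transitivity (\sum_a state_law P pi rho t s * pi s a).
  by apply: eq_bigr => a _; rewrite -mulr_sumr (HP s a).2 mulr1.
by rewrite -mulr_sumr (Hpi s).2 mulr1.
Qed.

Lemma cvg_sumI (R : realType) (I : Type) (r : seq I) (f : I -> nat -> R) (l : I -> R) :
  (forall i, f i n @[n --> \oo] --> l i) ->
  \sum_(i <- r) f i n @[n --> \oo] --> \sum_(i <- r) l i.
Proof.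
move=> H; elim: r => [|i r IH].
  rewrite big_nil; under eq_cvg do rewrite big_nil; exact: cvg_cst.
rewrite big_cons; under eq_cvg do rewrite big_cons.
exact: cvgD.
Qed.

Definition dsum (R : realType) (S A : finType) (gamma : R) (P : S -> A -> S -> R)
  (pi : S -> A -> R) (rho : S -> R) (s : S) (n : nat) : R :=
  \sum_(0 <= t < n) gamma ^+ t * state_law P pi rho t s.

Arguments dsum {R S A}.

Lemma dsum_props (R : realType) (S A : finType) (gamma : R) (P : S -> A -> S -> R)
  (pi : S -> A -> R) (rho : S -> R) (s : S) :
  0 < gamma < 1 -> is_kernel P -> is_policy pi -> is_distr rho ->
  let D := limn (dsum gamma P pi rho s) in
  [/\ dsum gamma P pi rho s n @[n --> \oo] --> D, rho s <= D & D <= 1 / (1 - gamma)].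
Proof.
move=> /andP[g0 g1] HP Hpi Hrho D.
have Hst t s' : 0 <= state_law P pi rho t s' <= 1.
  have [H0 H1] := @state_law_distr _ _ _ P pi rho t HP Hpi Hrho.
  rewrite H0 /= -H1 (bigD1 s') //= lerDl; exact: sumr_ge0.
have mono : {homo dsum gamma P pi rho s : n m / (n <= m)%N >-> n <= m}.
  move=> n m nm; rewrite /dsum (big_cat_nat (leq0n n) nm) /= lerDl.
  apply: sumr_ge0 => t _; apply: mulr_ge0; [exact: exprn_ge0 (ltW g0)|].
  by case/andP: (Hst t s).
have ub n : dsum gamma P pi rho s n <= 1 / (1 - gamma).
  apply: le_trans (geometric_le_lim n ler01 g0 _); last first.
    by rewrite ger0_norm ?ltW.
  rewrite /dsum /series /=; apply: ler_sum => t _.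
  rewrite /geometric mul1r ler_piMr //; [exact: exprn_ge0 (ltW g0)|].
  by case/andP: (Hst t s).
have cv : cvgn (dsum gamma P pi rho s).
  apply: nondecreasing_is_cvgn => //; exists (1 / (1 - gamma)) => _ [n _ <-]; exact: ub.
split => //.
- have := nondecreasing_cvgn_le mono cv 1.
  by rewrite /dsum big_nat1 expr0 mul1r.
- apply: limr_le => //; exact: nearW.
Qed.

Lemma occE (R : realType) (S A : finType) (gamma : R) (P : S -> A -> S -> R)
  (pi : S -> A -> R) (rho : S -> R) (s : S) (a : A) :
  0 < gamma < 1 -> is_kernel P -> is_policy pi -> is_distr rho ->
  occ gamma P pi rho s a = limn (dsum gamma P pi rho s) * pi s a.
Proof.
move=> Hg HP Hpi Hrho.
have [cv _ _] := @dsum_props _ _ _ gamma P pi rho s Hg HP Hpi Hrho.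
rewrite /occ; apply: cvg_lim => //.
have -> : (fun n => \sum_(0 <= t < n) gamma ^+ t * sa_law P pi rho t s a)
   = (fun n => dsum gamma P pi rho s n * pi s a).
  apply: funext => n; rewrite /dsum mulr_suml; apply: eq_bigr => t _.
  by rewrite /sa_law mulrA.
apply: cvgM => //; exact: cvg_cst.
Qed.

Lemma dsum_rec (R : realType) (S A : finType) (gamma : R) (P : S -> A -> S -> R)
  (pi : S -> A -> R) (rho : S -> R) (s' : S) n :
  dsum gamma P pi rho s' n.+1 =
  rho s' + gamma * \sum_s \sum_a P s a s' * pi s a * dsum gamma P pi rho s n.
Proof.
rewrite /dsum big_nat_recl //= expr0 mul1r; congr (_ + _).
under eq_bigr => t _ do rewrite exprS -mulrA mulr_sumr.
rewrite -mulr_sumr; congr (_ * _).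
rewrite exchange_big /=; apply: eq_bigr => s _.
under eq_bigr => t _ do rewrite mulr_sumr.
rewrite exchange_big /=; apply: eq_bigr => a _.
rewrite mulr_sumr; apply: eq_bigr => t _.
ring.
Qed.

Lemma occ_inF (R : realType) (S A : finType) (gamma : R) (P : S -> A -> S -> R)
  (pi : S -> A -> R) (rho : S -> R) :
  0 < gamma < 1 -> is_kernel P -> is_policy pi -> is_distr rho ->
  in_F gamma P rho (occ gamma P pi rho).
Proof.
move=> Hg HP Hpi Hrho.
pose D s := limn (dsum gamma P pi rho s).
have oE s a : occ gamma P pi rho s a = D s * pi s a by exact: occE.
have HD s := @dsum_props _ _ _ gamma P pi rho s Hg HP Hpi Hrho.
split.
  move=> s a; rewrite oE; apply: mulr_ge0; last exact: (Hpi s).1.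
  have [_ h _] := HD s; apply: le_trans h; exact: (Hrho.1 s).
move=> s'.
have Deq : D s' = rho s' + gamma * \sum_s \sum_a P s a s' * pi s a * D s.
  have [cv _ _] := HD s'.
  apply: (cvg_unique _ cv) => //=.
  rewrite -cvg_shiftS /=.
  under eq_cvg => n do rewrite dsum_rec.
  apply: cvgD; first exact: cvg_cst.
  apply: cvgM; first exact: cvg_cst.
  apply: cvg_sumI => s; apply: cvg_sumI => a.
  apply: cvgM; first exact: cvg_cst.
  by have [] := HD s.
rewrite (eq_bigr (fun s => \sum_a @Bmat R S A s a s' * occ gamma P pi rho s a
   - \sum_a gamma * P s a s' * occ gamma P pi rho s a)); last first.
  by move=> s _; rewrite -sumrB; apply: eq_bigr => a _; rewrite mulrBl.
rewrite sumrB.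
have -> : \sum_s \sum_a @Bmat R S A s a s' * occ gamma P pi rho s a = D s'.
  rewrite (bigD1 s') //= [X in _ + X]big1; last first.
    move=> s sn; apply: big1 => a _; rewrite /Bmat.
    by move: sn; case: eqP => // _ _; rewrite mul0r.
  rewrite addr0; under eq_bigr => a _ do rewrite /Bmat eqxx mul1r oE.
  by rewrite -mulr_sumr (Hpi s').2 mulr1.
rewrite {1}Deq mulr_sumr; apply/eqP; rewrite -subr_eq0; apply/eqP.
rewrite [X in rho s' + X](_ : _ = \sum_s \sum_a gamma * P s a s' * occ gamma P pi rho s a).
  by rewrite addrK subrr.
apply: eq_bigr => s _; rewrite mulr_sumr; apply: eq_bigr => a _; rewrite oE; ring.
Qed.

Local Close Scope classical_set_scope.

Theorem proposition4 (R : realType) (S A : finType) (N nc : nat)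
    (gamma : R) (rho : S -> R) (P : 'I_N -> S -> A -> S -> R)
    (piE : 'I_N -> S -> A -> R) (Phi : S -> A -> 'I_nc -> R) (eps : R) :
  0 < gamma < 1 ->
  is_distr rho ->
  (forall i, is_kernel (P i)) ->
  (forall i, is_policy (piE i)) ->
  (forall s a k, `|Phi s a k| <= 1) ->
  0 <= eps ->
  (forall (pis : 'I_N -> S -> A -> R) (pic : S -> A -> R),
     CAL_feasible eps pis pic ->
     exists (nus : 'I_N -> S -> R) (lams : 'I_N -> S -> A -> R),
       R_feasible eps gamma P rho
         (fun i => occ gamma (P i) (pis i) rho) pic lams nus)
  /\
  (R_value eps gamma P rho Phi piE <= CAL_value eps gamma P rho Phi piE)%E.
Proof.
move=> Hg Hrho HP HpiE HPhi Heps.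
have part1 : forall (pis : 'I_N -> S -> A -> R) (pic : S -> A -> R),
     CAL_feasible eps pis pic ->
     exists (nus : 'I_N -> S -> R) (lams : 'I_N -> S -> A -> R),
       R_feasible eps gamma P rho
         (fun i => occ gamma (P i) (pis i) rho) pic lams nus.
  move=> pis pic [Hpis [Hpic Hclose]].
  pose nus i s := limn (dsum gamma (P i) (pis i) rho s).
  exists nus, (fun i s a => nus i s * pic s a).
  have oE i s a : occ gamma (P i) (pis i) rho s a = nus i s * pis i s a.
    exact: occE.
  have HD i s := @dsum_props _ _ _ gamma (P i) (pis i) rho s Hg (HP i) (Hpis i) Hrho.
  have Dlo i s : rho s <= nus i s by have [] := HD i s.
  have Dhi i s : nus i s <= 1 / (1 - gamma) by have [] := HD i s.
  have rho0 s : 0 <= rho s := Hrho.1 s.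
  have pic0 s a : 0 <= pic s a := (Hpic s).1 a.
  have pic1 s a : pic s a <= 1.
    rewrite -(Hpic s).2 (bigD1 a) //= lerDl; exact: sumr_ge0.
  split; first by move=> i; exact: occ_inF.
  split; first exact: Hpic.
  split.
    move=> i s a; apply: mulr_ge0 => //; exact: le_trans (Dlo i s).
  split.
    move=> i s; under eq_bigr => a _ do rewrite oE.
    by rewrite -mulr_sumr (Hpis i s).2 mulr1.
  move=> i s a.
  have g1 : 0 < 1 - gamma by case/andP: Hg => _ g1; rewrite subr_gt0.
  have KA : 1 / (1 - gamma) <= #|A|%:R / (1 - gamma).
    apply: ler_wpM2r; first by rewrite invr_ge0 ltW.
    rewrite ler1n; apply/card_gt0P; by exists a.
  set K := #|A|%:R / (1 - gamma) in KA *.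
  have DK : nus i s <= K := le_trans (Dhi i s) KA.
  have D0 : 0 <= nus i s := le_trans (rho0 s) (Dlo i s).
  have h1 := Dlo i s; have h2 := pic0 s a; have h3 := pic1 s a.
  split.
  - rewrite oE -mulrBr normrM (ger0_norm D0) mulrC.
    by apply: ler_wpM2r => //; exact: Hclose.
  - by apply: ler_wpM2r.
  - nra.
  - nra.
  - by apply: ler_wpM2r.
split => //.
apply: le_ereal_inf => _ [x Hx <-].
have [nus [lams H]] := part1 _ _ Hx.
by exists (((fun i => occ gamma (P i) (x.1 i) rho), x.2, lams), nus).
Qed.
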